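(* Let $G=(V,E,L)$ be a graph with loops, let $\{i,i\}\in L^+$ and let $M_1\subset M_2\subseteq N(i)$ with $i\in M_1$. For $k=1,2$ let $\Sigma(M_k)$ denote the system $$z_{ii}\ \ge\sum_{J\subseteq M_k:\, i\in J}\frac{\big(\ell_{d_k}(J,M_k\setminus J)\big)^2}{\ell_{d_k-1}(J\setminus\{i\},M_k\setminus J)},\qquad \ell_{d_k}(J,M_k\setminus J)\ge 0\quad\forall J\subseteq M_k,$$ with $d_k:=|M_k|$, in the variables $z_{ii}$ and $z_S$, $S\subseteq M_k$, $S\neq\emptyset$. Then the system $\Sigma(M_1)$ is implied by $\Sigma(M_2)$: every assignment of the variables $z_{ii}$, $z_S$ ($S\subseteq M_2$) satisfying $\Sigma(M_2)$ satisfies $\Sigma(M_1)$ when restricted to the variables $z_{ii}$, $z_S$ ($S\subseteq M_1$).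
   Context: A graph with loops is $G=(V,E,L)$: $V$ finite node set, $E$ a set of unordered pairs of distinct nodes, $L$ a set of loops $\{i,i\}$ partitioned as $L=L^-\cup L^+$ (minus/plus loops). For a plus loop $\{i,i\}$, $N(i):=\{j\in V:\{i,j\}\in E\cup L\}$ (so $i\in N(i)$). Variables: $z_\emptyset:=1$, $z_{\{k\}}:=z_k$, and for $|S|\ge2$ a variable $z_S$ (equal to the edge variable when $S\in E$, auxiliary otherwise); the loop variable $z_{ii}$ is separate. For disjoint $J_1,J_2$ with $|J_1\cup J_2|=d$, $\ell_d(J_1,J_2):=\sum_{t\subseteq J_2}(-1)^{|t|}z_{J_1\cup t}$. Each $u^2/v$ denotes the closed perspective: $u^2/v$ if $v>0$, $0$ if $u=v=0$, $+\infty$ if $u\neq0,v=0$. *)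

(* Defs.v *)
From HB Require Import structures.
From mathcomp Require Import all_boot all_order all_algebra.
From mathcomp Require Import constructive_ereal.
Set Implicit Arguments. Unset Strict Implicit. Unset Printing Implicit Defensive.
Import Order.TTheory GRing.Theory Num.Theory.
Local Open Scope ring_scope.

(* A graph with loops G = (V, E, L^- ∪ L^+): edges are 2-element subsets of V,
   a loop {i,i} is identified with the node i; Lm / Lp are the nodes carrying
   a minus / plus loop (disjoint). *)
Definition graph_with_loops (V : finType) (E : {set {set V}}) (Lm Lp : {set V}) : Prop :=
  (forall e, e \in E -> #|e| = 2%N) /\ [disjoint Lm & Lp].

Definition nbhd (V : finType) (E : {set {set V}}) (Lm Lp : {set V}) (i : V) : {set V} :=
  [set j | ([set i; j] \in E) || ((j == i) && ((i \in Lm) || (i \in Lp)))].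

Definition zv (R : pzRingType) (V : finType) (z : {set V} -> R) (S : {set V}) : R :=
  if S == set0 then 1 else z S.

(* ℓ_d(J1,J2) = Σ_{t ⊆ J2} (-1)^{|t|} z_{J1 ∪ t}  (d = |J1 ∪ J2| is implicit) *)
Definition ell (R : pzRingType) (V : finType) (z : {set V} -> R) (J1 J2 : {set V}) : R :=
  \sum_(t : {set V} | t \subset J2) (-1) ^+ #|t| * zv z (J1 :|: t).

(* closed perspective u^2/v, valued in the extended reals
   (v < 0 lies outside the domain: +oo by convention). *)
Definition persp (R : realFieldType) (u v : R) : \bar R :=
  if 0 < v then ((u ^+ 2) / v)%:E
  else if (u == 0) && (v == 0) then 0%E else +oo%E.

Definition Sigma (R : realFieldType) (V : finType) (i : V) (M : {set V})
    (zii : R) (z : {set V} -> R) : Prop :=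
  (forall J : {set V}, J \subset M -> 0 <= ell z J (M :\: J)) /\
  (\sum_(J : {set V} | (J \subset M) && (i \in J))
      persp (ell z J (M :\: J)) (ell z (J :\ i) (M :\: J)) <= zii%:E)%E.

(* Main.v *)
Require Import Defs.
From HB Require Import structures.
From mathcomp Require Import all_boot all_order all_algebra.
From mathcomp Require Import constructive_ereal.
From mathcomp Require Import ring lra.
Import Order.TTheory GRing.Theory Num.Theory.
Local Open Scope ring_scope.

Lemma big_subset_add1 (T : Type) (idx : T) (op : Monoid.com_law idx)
  (V : finType) (j : V) (D : {set V}) (P : pred {set V}) (F : {set V} -> T) :
  j \notin D ->
  \big[op/idx]_(K : {set V} | (K \subset j |: D) && P K) F K =
  op (\big[op/idx]_(K : {set V} | (K \subset D) && P K) F K)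
     (\big[op/idx]_(K : {set V} | (K \subset D) && P (j |: K)) F (j |: K)).
Proof.
move=> jD.
have jK' : forall K : {set V}, K \subset D -> j \notin K.
  by move=> K' sK'; apply: contra jD; apply: (subsetP sK').
rewrite (bigID (fun K : {set V} => j \in K)) /= Monoid.mulmC; apply: congr2.
  apply: eq_bigl => K.
  apply/idP/idP.
    case/andP => /andP [sK PK] jK; rewrite PK andbT.
    apply/subsetP => x xK; have := subsetP sK x xK; rewrite in_setU1.
    by case/orP => // /eqP ex; rewrite -ex xK in jK.
  case/andP => sK PK; rewrite PK andbT jK' //.
  by rewrite (subset_trans sK) // subsetUr.
rewrite (reindex_onto (fun K => j |: K) (fun K => K :\ j)) /=; last first.
  by move=> K /andP [_ jK]; rewrite setD1K.
apply: eq_bigl => K.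
apply/idP/idP.
  case/andP => /andP [/andP [sK PK] _] /eqP eK; rewrite PK andbT.
  rewrite -eK; apply/subsetP => x; rewrite !inE => /andP [xj xK].
  have := subsetP sK x; rewrite !inE xK (negbTE xj) /=. by apply.
case/andP => sK PK; rewrite PK setU11 andbT /= setUS //=.
by rewrite setU1K // jK'.
Qed.

Lemma ell_add1 (R : realFieldType) (V : finType) (z : {set V} -> R) (J1 J2 : {set V}) (j : V) :
  j \notin J1 -> j \notin J2 ->
  ell z J1 J2 = ell z J1 (j |: J2) + ell z (j |: J1) J2.
Proof.
move=> jJ1 jJ2.
have -> : ell z J1 (j |: J2) = \sum_(t : {set V} | (t \subset j |: J2) && predT t)
    (-1) ^+ #|t| * zv z (J1 :|: t).
  by rewrite /ell; apply: eq_bigl => t; rewrite andbT.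
rewrite (@big_subset_add1 _ _ _ _ j J2 predT _ jJ2) /=.
rewrite /ell !(eq_bigl _ _ (fun t : {set V} => andbT (t \subset J2))).
rewrite -addrA -big_split /= -[LHS]addr0; congr (_ + _).
rewrite big1 // => t tJ2.
have jt : j \notin t by apply: contra jJ2; apply: (subsetP tJ2).
rewrite cardsU1 jt add1n exprS setUCA -setUA; ring.
Qed.

Lemma persp_ge0 (R : realFieldType) (u v : R) : (0 <= persp u v)%E.
Proof.
rewrite /persp; case: ifP => v0.
  by rewrite lee_fin divr_ge0 ?sqr_ge0 // ltW.
by case: ifP => _; rewrite ?lexx ?leey.
Qed.

Lemma persp_cases (R : realFieldType) (u v : R) :
  persp u v = +oo%E \/ (0 < v /\ persp u v = (u ^+ 2 / v)%:E) \/ (u = 0 /\ v = 0).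
Proof.
rewrite /persp; case: ifP => v0; first by right; left.
case: ifP => [/andP [/eqP -> /eqP ->]|]; by [right; right | left].
Qed.

Lemma persp00 (R : realFieldType) : persp (0 : R) 0 = 0%E.
Proof. by rewrite /persp ltxx eqxx. Qed.

Lemma persp_sub (R : realFieldType) (u1 v1 u2 v2 : R) :
  (persp (u1 + u2) (v1 + v2) <= persp u1 v1 + persp u2 v2)%E.
Proof.
have ninf : forall u v : R, persp u v != -oo%E.
  by move=> u v; have := @persp_ge0 _ u v; case: (persp u v).
case: (@persp_cases _ u1 v1) => [->|[[v10 e1]|[-> ->]]].
- by rewrite addye ?leey.
- case: (@persp_cases _ u2 v2) => [->|[[v20 e2]|[-> ->]]].
  + by rewrite addey ?leey.
  + rewrite e1 e2 /persp addr_gt0 // -EFinD lee_fin.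
    rewrite -subr_ge0.
    have -> : u1 ^+ 2 / v1 + u2 ^+ 2 / v2 - (u1 + u2) ^+ 2 / (v1 + v2)
       = (u1 * v2 - u2 * v1) ^+ 2 / (v1 * v2 * (v1 + v2)).
      field.
      by rewrite !lt0r_neq0 ?addr_gt0.
    by rewrite divr_ge0 ?sqr_ge0 // !mulr_ge0 // ltW // addr_gt0.
  + by rewrite !addr0 persp00 adde0.
- case: (@persp_cases _ u2 v2) => [->|[[v20 e2]|[-> ->]]].
  + by rewrite addey ?leey.
  + by rewrite !add0r persp00 add0e.
  + by rewrite !addr0 persp00 adde0.
Qed.

Lemma sigma_step (R : realFieldType) (V : finType) (i j : V) (M : {set V})
  (zii : R) (z : {set V} -> R) :
  j \notin M -> i \in M -> Sigma i (j |: M) zii z -> Sigma i M zii z.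
Proof.
move=> jM iM [H1 H2].
have ij : i != j by apply: contraNneq jM => <-.
have jJ : forall J : {set V}, J \subset M -> j \notin J.
  by move=> J sJ; apply: contra jM; apply: (subsetP sJ).
have eA : forall J : {set V}, J \subset M -> j |: (M :\: J) = (j |: M) :\: J.
  move=> J sJ; apply/setP => x; rewrite !inE.
  by case: (eqVneq x j) => [->|] //=; rewrite (negbTE (jJ J sJ)).
have eB : forall J : {set V}, J \subset M -> M :\: J = (j |: M) :\: (j |: J).
  move=> J sJ; apply/setP => x; rewrite !inE.
  case: (eqVneq x j) => [->|] //=; by rewrite (negbTE jM) andbF.
have jD : forall J : {set V}, J \subset M -> j \notin M :\: J.
  by move=> J sJ; rewrite !inE negb_and jM orbT.
have eU : forall J : {set V}, J \subset M -> ell z J (M :\: J) =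
    ell z J ((j |: M) :\: J) + ell z (j |: J) ((j |: M) :\: (j |: J)).
  by move=> J sJ; rewrite -(eA J sJ) -(eB J sJ) -(@ell_add1 _ _ z J (M :\: J) j (jJ J sJ) (jD J sJ)).
have eV : forall J : {set V}, J \subset M -> ell z (J :\ i) (M :\: J) =
    ell z (J :\ i) ((j |: M) :\: J) + ell z ((j |: J) :\ i) ((j |: M) :\: (j |: J)).
  move=> J sJ; rewrite -(eA J sJ) -(eB J sJ).
  have -> : (j |: J) :\ i = j |: (J :\ i).
    by apply/setP => x; rewrite !inE; case: (eqVneq x j) => [->|] //=; rewrite eq_sym ij.
  rewrite -ell_add1 ?jD //.
  by rewrite !inE negb_and jJ ?orbT.
split.
  move=> J sJ; rewrite eU //; apply: addr_ge0; apply: H1.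
    by rewrite (subset_trans sJ) // subsetUr.
  by rewrite setUS.
apply: le_trans H2.
rewrite (@big_subset_add1 _ _ _ _ j M (fun J => i \in J) _ jM) /=.
rewrite [X in (_ + X)%E](eq_bigl (fun J : {set V} => (J \subset M) && (i \in J))); last first.
  by move=> J; rewrite !inE (negbTE ij).
rewrite -big_split /=; apply: lee_sum => J /andP [sJ iJ].
rewrite eU // eV //; exact: persp_sub.
Qed.

Lemma main_ind (R : realFieldType) (V : finType) (i : V) (M1 : {set V})
  (zii : R) (z : {set V} -> R) n : forall M2 : {set V}, (#|M2| <= n)%N ->
  M1 \subset M2 -> i \in M1 -> Sigma i M2 zii z -> Sigma i M1 zii z.
Proof.
elim: n => [|n IH] M2 cM2 sM iM1 HS.
  move: cM2; rewrite leqn0 cards_eq0 => /eqP M20.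
  by move: iM1 => /(subsetP sM); rewrite M20 inE.
case: (eqVneq M2 M1) => [<- //|neq].
have : M1 \proper M2 by rewrite properEneq eq_sym neq.
case/properP => _ [j jM2 jM1].
have iM : i \in M2 :\ j by rewrite !inE (subsetP sM _ iM1) andbT; apply: contraNneq jM1 => <-.
apply: (IH (M2 :\ j)).
- by rewrite -ltnS (leq_trans _ cM2) // (cardsD1 j M2) jM2.
- apply/subsetP => x xM1; rewrite !inE (subsetP sM) // andbT.
  by apply: contraNneq jM1 => <-.
- done.
apply: (@sigma_step _ _ i j (M2 :\ j)); first by rewrite !inE eqxx.
  done.
by rewrite setD1K.
Qed.

Theorem proposition6 (R : realFieldType) (V : finType) (E : {set {set V}})
    (Lm Lp : {set V}) (i : V) (M1 M2 : {set V}) :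
  graph_with_loops E Lm Lp ->
  i \in Lp ->
  M1 \proper M2 -> M2 \subset nbhd E Lm Lp i -> i \in M1 ->
  forall (zii : R) (z : {set V} -> R),
    Sigma i M2 zii z -> Sigma i M1 zii z.
Proof.
move=> _ _ pM _ iM1 zii z.
apply: (@main_ind _ _ i M1 zii z #|M2| M2) => //.
exact: proper_sub pM.
Qed.
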